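(* Consider Dynamic A* (with \texttt{reeval} true or false) using a dyn-admissible dynamic heuristic on a solvable transition system with initial state $s_I$. Then at the beginning of each iteration of the while loop, Open contains an entry $\langle\cdot,\hat g,\hat h\rangle$ with $\hat g+\hat h\le h^*(s_I)$.
   Context: A transition system is $\mathcal T=\langle S,L,c,T,s_I,S_G\rangle$ with finite states $S$, finite labels $L$, cost function $c:L\to\mathbb R_{\ge0}$, transitions $T\subseteq S\times L\times S$, initial state $s_I$, goal states $S_G\subseteq S$. Paths, costs, solutions (paths from $s_I$ to a goal state) are as usual; $\mathcal T$ is solvable if it has a solution; $g^*(s)$ is the cost of an optimal path from $s_I$ to $s$ and $h^*(s)$ the minimal cost of a path from $s$ to a goal ($\infty$ if none). An information source $\sigma$ consists of a set $\mathcal I_\sigma$, $\iota_0^\sigma\in\mathcal I_\sigma$, $\mathrm{update}_\sigma:\mathcal I_\sigma\times T\to\mathcal I_\sigma$, $\mathrm{refine}_\sigma:\mathcal I_\sigma\times S\to\mathcal I_\sigma$. Reachable information: $\iota_n$ is reachable if obtained from $\iota_0^\sigma$ by a sequence of refine steps on states and update steps on transitions $e_1,\dots,e_n$, where each refined state and each origin of an updated transition is $s_I$ or the target of an earlier updated transition. A dynamic heuristic over $\sigma$ is $h:S\times\mathcal I_\sigma\to\mathbb R_{\ge0}\cup\{\infty\}$; it is dyn-admissible if $h(s,\iota)\le h^*(s)$ for all $s$ and all reachable $\iota$. Parent source $\sigma_p$: $\mathcal I_{\sigma_p}$ = partial functions $S\rightharpoonup\mathbb R_{\ge0}\times(T\cup\{\bot\})$;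 $\iota_0=\{s_I\mapsto\langle0,\bot\rangle\}$; refine is the identity; $\mathrm{update}(\iota,\langle s,\ell,s'\rangle)$ with $\iota(s)=\langle g,\cdot\rangle$ changes only $s'$, setting it to $\langle g+c(\ell),\langle s,\ell,s'\rangle\rangle$ if $\iota(s')$ is undefined or has $g$-component $\ge g+c(\ell)$, otherwise unchanged. Dynamic A* takes $\mathcal T$, sources $\sigma_p,\sigma_h$, a dynamic heuristic $h$ over $\sigma_h$ and a Boolean flag \texttt{reeval}. Notation: at any moment $g(s)$ is the $g$-component of the current $\mathcal I(\sigma_p)(s)$ and $h(s)$ denotes $h(s,\mathcal I(\sigma_h))$ for the current $\mathcal I(\sigma_h)$. Open is a priority queue of entries $\langle s,g,h\rangle$ (duplicates allowed), popped by minimal stored value $g+h$ (ties arbitrary). Algorithm: 1. $\mathcal I(\sigma):=\iota_0^\sigma$ for both sources; $S_{\mathrm{known}}:=\{s_I\}$; Closed $:=\emptyset$; Open empty. If $h(s_I)<\infty$ insert $\langle s_I,g(s_I),h(s_I)\rangle$. 2. While Open is nonempty: pop an entry $\langle s,\hat g,\hat h\rangle$ of minimal $\hat g+\hat h$. If $s\in$ Closed, continue with the next iteration. Otherwise set $\mathcal I(\sigma):=\mathrm{refine}_\sigma(\mathcal I(\sigma),s)$ for both sources. If \texttt{reeval} is true and $\hat h<h(s)$: if $h(s)<\infty$ insert $\langle s,g(s),h(s)\rangle$; continue with the next iteration (this is a re-evaluation). Otherwise add $s$ to Closed ($s$ is expanded). If $s\in S_G$, return the path obtained by following the parent pointers of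 $\mathcal I(\sigma_p)$ from $s$ back to $s_I$. Otherwise, for each $t=\langle s,\ell,s'\rangle\in T$ in some order: let $old:=g(s')$ if $s'\in S_{\mathrm{known}}$ and undefined otherwise; set $\mathcal I(\sigma):=\mathrm{update}_\sigma(\mathcal I(\sigma),t)$ for both sources; add $s'$ to $S_{\mathrm{known}}$; if $h(s')=\infty$ skip $s'$; else if $old$ is undefined insert $\langle s',g(s'),h(s')\rangle$; else if $old>g(s')$, remove $s'$ from Closed if it is there (reopening) and insert $\langle s',g(s'),h(s')\rangle$. 3. Return ''unsolvable''. *)

(* Defs.v *)
From HB Require Import structures.
From mathcomp Require Import all_boot all_order all_algebra.
From mathcomp Require Import boolp classical_sets reals constructive_ereal ereal.
Set Implicit Arguments. Unset Strict Implicit. Unset Printing Implicit Defensive.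
Import Order.TTheory GRing.Theory Num.Theory.
Local Open Scope ring_scope.

Definition trans (S L : finType) := (S * L * S)%type.

Section TransitionSystem.
Variables (R : realType) (S L : finType) (c : L -> R) (T : {set trans S L}).

Fixpoint is_path (s : S) (p : seq (trans S L)) (s' : S) : Prop :=
  match p with
  | [::] => s = s'
  | t :: p' => t \in T /\ t.1.1 = s /\ is_path t.2 p' s'
  end.

Definition path_cost (p : seq (trans S L)) : R := \sum_(t <- p) c t.1.2.

Definition solvable (sI : S) (SG : {set S}) : Prop :=
  exists p s', s' \in SG /\ is_path sI p s'.

(* h*(s): minimal (infimum) cost of a path from s to a goal, +oo if none *)
Definition hstar (SG : {set S}) (s : S) : \bar R :=
  ereal_inf [set (path_cost p)%:E |
             p in [set p | exists2 s', s' \in SG & is_path s p s']]%classic.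

End TransitionSystem.

Record info_source (S L : finType) := InfoSource {
  info : Type;
  info0 : info;
  info_update : info -> trans S L -> info;
  info_refine : info -> S -> info }.

Section Reachability.
Variables (R : realType) (S L : finType) (c : L -> R) (T : {set trans S L}).

Inductive reach_info (σ : info_source S L) (sI : S) : info σ -> {set S} -> Prop :=
| RI_init : reach_info sI (info0 σ) [set sI]
| RI_refine (ι : info σ) (K : {set S}) (s : S) :
    reach_info sI ι K -> s \in K -> reach_info sI (info_refine ι s) K
| RI_update (ι : info σ) (K : {set S}) (t : trans S L) :
    reach_info sI ι K -> t \in T -> t.1.1 \in K ->
    reach_info sI (info_update ι t) (t.2 |: K).

Definition reachable_info (σ : info_source S L) (sI : S) (ι : info σ) : Prop :=
  exists K, reach_info sI ι K.

Definition dyn_heuristic (σ : info_source S L) (h : S -> info σ -> \bar R) : Prop :=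
  forall s ι, (0 <= h s ι)%E.

Definition dyn_admissible (σ : info_source S L) (sI : S) (SG : {set S})
    (h : S -> info σ -> \bar R) : Prop :=
  forall s ι, reachable_info sI ι -> (h s ι <= hstar c T SG s)%E.

End Reachability.

(* Partial functions S -> R_{>=0} x (T \cup {bot}): None = undefined, *)
(* second component None = bot.                                       *)

Section Parent.
Variables (R : realType) (S L : finType) (c : L -> R).

Definition pinfo := S -> option (R * option (trans S L)).

(* update(ι, <s,l,s'>); when ι(s) is undefined (never happens in the
   algorithm) the information is left unchanged. *)
Definition pupdate (ι : pinfo) (t : trans S L) : pinfo :=
  let s := t.1.1 in let l := t.1.2 in let s' := t.2 in
  match ι s with
  | None => ι
  | Some (g, _) =>
      let ng := g + c l in
      let nw := fun x => if x == s' then Some (ng, Some t) else ι x in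
      match ι s' with
      | None => nw
      | Some (g', _) => if ng <= g' then nw else ι
      end
  end.

Definition parent_source (sI : S) : info_source S L :=
  @InfoSource S L pinfo (fun x => if x == sI then Some (0, None) else None)
    pupdate (fun ι _ => ι).

(* the g-component (default 0 where undefined; never used there) *)
Definition gval (ι : pinfo) (s : S) : R :=
  if ι s is Some (g, _) then g else 0.

End Parent.

(* Dynamic A*: configurations at the head of the while loop and one   *)
(* (non-returning) iteration of the loop, as a nondeterministic       *)
(* relation (ties in Open and the order of successors are arbitrary). *)

Record config (R : realType) (S L : finType) (σ : info_source S L) := Config {
  cfgP : pinfo R S L;
  cfgH : info σ;
  cknown : {set S};
  cclosed : {set S};
  copen : seq (S * R * \bar R) }.

Section DynamicAstar.
Variables (R : realType) (S L : finType) (c : L -> R) (T : {set trans S L}).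
Variables (sI : S) (SG : {set S}) (σ : info_source S L).
Variables (h : S -> info σ -> \bar R) (reeval : bool).

Definition entry_val (e : S * R * \bar R) : \bar R := ((e.1.2)%:E + e.2)%E.


Definition process (cf : config R σ) (t : trans S L) : config R σ :=
  let s' := t.2 in
  let old := if s' \in cknown cf then Some (gval (cfgP cf) s') else None in
  let P' := pupdate c (cfgP cf) t in
  let H' := info_update (cfgH cf) t in
  let K' := s' |: cknown cf in
  let e := (s', gval P' s', h s' H') in
  if (h s' H' == +oo)%E then Config P' H' K' (cclosed cf) (copen cf)
  else match old with
       | None => Config P' H' K' (cclosed cf) (e :: copen cf)
       | Some go =>
           if gval P' s' < go
           then Config P' H' K' (cclosed cf :\ s') (e :: copen cf)
           else Config P' H' K' (cclosed cf) (copen cf)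
       end.

Definition init_config : config R σ :=
  let P0 : pinfo R S L := fun x => if x == sI then Some (0, None) else None in
  let H0 := info0 σ in
  Config P0 H0 [set sI] finset.set0
    (if (h sI H0 < +oo)%E then [:: (sI, gval P0 sI, h sI H0)] else [::]).

Definition pop (cf : config R σ) (e : S * R * \bar R) (rest : seq (S * R * \bar R)) :=
  [/\ e \in copen cf,
      (forall e', e' \in copen cf -> (entry_val e <= entry_val e')%E)
    & rest = rem e (copen cf)].

Definition refP (cf : config R σ) (s : S) : pinfo R S L := cfgP cf.
Definition refH (cf : config R σ) (s : S) : info σ := info_refine (cfgH cf) s.

Inductive iter_step : config R σ -> config R σ -> Prop :=
| IS_closed cf e rest :
    pop cf e rest -> e.1.1 \in cclosed cf ->
    iter_step cf (Config (cfgP cf) (cfgH cf) (cknown cf) (cclosed cf) rest)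
| IS_reeval cf e rest :
    pop cf e rest -> e.1.1 \notin cclosed cf ->
    reeval -> (e.2 < h e.1.1 (refH cf e.1.1))%E ->
    iter_step cf
      (Config (refP cf e.1.1) (refH cf e.1.1) (cknown cf) (cclosed cf)
         (if (h e.1.1 (refH cf e.1.1) < +oo)%E
          then (e.1.1, gval (refP cf e.1.1) e.1.1, h e.1.1 (refH cf e.1.1)) :: rest
          else rest))
| IS_expand cf e rest (ts : seq (trans S L)) :
    pop cf e rest -> e.1.1 \notin cclosed cf ->
    ~~ (reeval && (e.2 < h e.1.1 (refH cf e.1.1))%E) ->
    e.1.1 \notin SG ->
    perm_eq ts [seq t <- enum T | t.1.1 == e.1.1] ->
    iter_step cf
      (foldl process
         (Config (refP cf e.1.1) (refH cf e.1.1) (cknown cf)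
            (e.1.1 |: cclosed cf) rest) ts).

Inductive loop_head : config R σ -> Prop :=
| LH_init : loop_head init_config
| LH_step cf cf' : loop_head cf -> iter_step cf cf' -> loop_head cf'.

End DynamicAstar.

(* Main.v *)
Require Import Defs.
From HB Require Import structures.
From mathcomp Require Import all_boot all_order all_algebra.
From mathcomp Require Import boolp classical_sets reals constructive_ereal ereal.
Import Order.TTheory GRing.Theory Num.Theory.
Local Open Scope ring_scope.
Set Implicit Arguments. Unset Strict Implicit.

Section PUpd.
Variables (R : realType) (S L : finType) (c : L -> R).
Hypothesis c_ge0 : forall l, 0 <= c l.

Lemma pup_other (P : pinfo R S L) t x : x != t.2 -> pupdate c P t x = P x.
Proof.
move=> nx; rewrite /pupdate.
case: (P t.1.1) => [[g q]|] //.
case: (P t.2) => [[g' q']|]; first case: ifP => // _.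
all: by rewrite (negbTE nx).
Qed.

Lemma gval_other (P : pinfo R S L) t x : x != t.2 -> gval (pupdate c P t) x = gval P x.
Proof. by move=> nx; rewrite /gval pup_other. Qed.

Lemma gval_new (P : pinfo R S L) t g q : P t.1.1 = Some (g, q) ->
  gval (pupdate c P t) t.2 <= g + c t.1.2.
Proof.
move=> Ps; rewrite /gval /pupdate Ps.
case E: (P t.2) => [[g' q']|]; last by rewrite eqxx.
case: ifP => [_|]; first by rewrite eqxx.
by rewrite E => /negbT; rewrite -ltNge => /ltW.
Qed.

Lemma gval_le (P : pinfo R S L) t x : P x <> None ->
  gval (pupdate c P t) x <= gval P x.
Proof.
move=> Px; have [xe|nx] := eqVneq x t.2; last by rewrite gval_other.
subst x; rewrite /gval /pupdate.
case: (P t.1.1) => [[g q]|]; last exact: lexx.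
case E: (P t.2) => [[g' q']|]; last by rewrite E in Px.
case: ifP => H; last by rewrite E.
by rewrite eqxx.
Qed.

Lemma pdef_keep (P : pinfo R S L) t x : P x <> None -> pupdate c P t x <> None.
Proof.
move=> Px; have [xe|nx] := eqVneq x t.2; last by rewrite pup_other.
subst x; rewrite /pupdate; case: (P t.1.1) => [[g q]|] //.
case E: (P t.2) => [[g' q']|]; last by rewrite E in Px.
by case: ifP => _; rewrite ?eqxx // E.
Qed.

Lemma pdef_new (P : pinfo R S L) t : P t.1.1 <> None -> pupdate c P t t.2 <> None.
Proof.
rewrite /pupdate; case: (P t.1.1) => [[g q]|] // _.
case E: (P t.2) => [[g' q']|]; last by rewrite eqxx.
by case: ifP => _; rewrite ?eqxx // E.
Qed.

Lemma gval_self (P : pinfo R S L) t g q : P t.1.1 = Some (g, q) ->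
  gval (pupdate c P t) t.1.1 = g.
Proof.
move=> Ps; have [E|nx] := eqVneq t.1.1 t.2; last by rewrite gval_other // /gval Ps.
move: Ps E; case: t => [[s l] s'] /= Ps E; subst s'.
rewrite /gval /pupdate /= Ps.
case: ifP => H; rewrite ?eqxx ?Ps //.
apply/eqP; rewrite eq_le H /=.
by rewrite lerDl c_ge0.
Qed.
End PUpd.

Section Main.
Variables (R : realType) (S L : finType) (c : L -> R) (T : {set trans S L}).
Variables (sI : S) (SG : {set S}) (σ : info_source S L).
Variables (h : S -> info σ -> \bar R) (reeval : bool).
Hypothesis c_ge0 : forall l, 0 <= c l.
Hypothesis adm : dyn_admissible c T sI SG h.

Definition live (s : S) := exists p s', s' \in SG /\ is_path T s p s'.

Lemma hstar_le s p s' : is_path T s p s' -> s' \in SG ->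
  (hstar c T SG s <= (path_cost c p)%:E)%E.
Proof. by move=> Hp Hs; apply: ereal_inf_lbound; exists p => //; exists s'. Qed.

Lemma live_fin s ι : live s -> reachable_info T sI ι -> (h s ι < +oo)%E.
Proof.
move=> [p [s' [Hs Hp]]] Hr.
apply: (le_lt_trans (adm s Hr)); apply: (le_lt_trans (hstar_le Hp Hs)).
exact: ltry.
Qed.

Record Invp (cf : config R σ) (ex : S -> trans S L -> Prop) : Prop := {
  i_reach : reach_info T sI (cfgH cf) (cknown cf);
  i_def : forall x, x \in cknown cf -> cfgP cf x <> None;
  i_sIK : sI \in cknown cf;
  i_sI : gval (cfgP cf) sI <= 0;
  i_goal : forall x, x \in cclosed cf -> x \notin SG;
  i_clK : forall x, x \in cclosed cf -> x \in cknown cf;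
  i_openK : forall e, e \in copen cf -> e.1.1 \in cknown cf;
  i_openH : forall e, e \in copen cf -> (e.2 <= hstar c T SG e.1.1)%E;
  i_op : forall x, x \in cknown cf -> live x -> x \notin cclosed cf ->
           exists2 e, e \in copen cf & e.1.1 = x /\ e.1.2 <= gval (cfgP cf) x;
  i_cl : forall x t, x \in cclosed cf -> live x -> t \in T -> t.1.1 = x -> ex x t ->
           t.2 \in cknown cf /\ gval (cfgP cf) t.2 <= gval (cfgP cf) x + c t.1.2 }.

Lemma Invp_weak cf ex ex' : Invp cf ex ->
  (forall x t, t \in T -> t.1.1 = x -> ex' x t -> ex x t) -> Invp cf ex'.
Proof.
case=> ? ? ? ? ? ? ? ? ? Hcl Hw; constructor => // x t H1 H2 H3 H4 H5.
by apply: Hcl => //; apply: Hw.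
Qed.

Lemma process_spec (cf : config R σ) t :
  let P' := pupdate c (cfgP cf) t in
  let H' := info_update (cfgH cf) t in
  let nw := (t.2, gval P' t.2, h t.2 H') in
  exists cl' op', process c h cf t = Config P' H' (t.2 |: cknown cf) cl' op' /\ [/\
    {subset cl' <= cclosed cf},
    (forall x, x != t.2 -> x \in cclosed cf -> x \in cl'),
    {subset copen cf <= op'},
    (forall e, e \in op' -> e \in copen cf \/ e = nw) &
    ((h t.2 H' != +oo)%E ->
    (t.2 \notin cl' -> nw \in op' \/
        [/\ t.2 \in cknown cf, t.2 \notin cclosed cf & gval (cfgP cf) t.2 <= gval P' t.2])
    /\ (t.2 \in cl' -> t.2 \notin cknown cf \/ gval (cfgP cf) t.2 <= gval P' t.2))].
Proof.
move=> P' H' nw; rewrite /process -/P' -/H'.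
case: ifP => Hoo.
  exists (cclosed cf), (copen cf); split => //; split => //; first by move=> e ->; left.
case: ifP => HK.
  case: ifP => Hlt.
    exists (cclosed cf :\ t.2), (nw :: copen cf); split => //; split => //.
    - by move=> x; rewrite in_setD1 => /andP[].
    - by move=> x nx xc; rewrite in_setD1 nx.
    - by move=> e ee; rewrite inE ee orbT.
    - by move=> e; rewrite inE => /orP[/eqP->|]; [right|left].
    - move=> _; split=> [_|]; first by left; rewrite inE eqxx.
      by rewrite in_setD1 eqxx.
  exists (cclosed cf), (copen cf); split => //; split => //; first by move=> e ->; left.
  move=> _; split=> [nc|_]; right.
  - by split => //; rewrite leNgt Hlt.
  - by rewrite leNgt Hlt.
exists (cclosed cf), (nw :: copen cf); split => //; split => //.
- by move=> e ee; rewrite inE ee orbT.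
- by move=> e; rewrite inE => /orP[/eqP->|]; [right|left].
- move=> _; split=> [_|]; first by left; rewrite inE eqxx.
  by move=> _; left; apply/negbT.
Qed.


Lemma process_inv cf ex t :
  Invp cf ex -> t \in T -> t.1.1 \in cknown cf ->
  Invp (process c h cf t) (fun x t0 => t0 = t \/ ex x t0).
Proof.
move=> I tT sK.
have [cl' [op' [-> [sub1 sub2 sub3 sub4 spec]]]] := process_spec cf t.
set P := cfgP cf in sub1 sub2 sub3 sub4 spec *.
set P' := pupdate c P t in spec *.
set H' := info_update (cfgH cf) t in spec *.
have reachH' : reach_info T sI H' (t.2 |: cknown cf).
  by apply: RI_update => //; exact: i_reach I.
have rH' : reachable_info T sI H' by exists (t.2 |: cknown cf).
have [[g q] Ps] : exists gq, P t.1.1 = Some gq.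
  case E: (P t.1.1) => [gq|]; first by exists gq.
  by have := i_def I sK; rewrite -/P E.
have gle x : x \in cknown cf -> gval P' x <= gval P x.
  by move=> xK; exact: (gval_le c t (i_def I xK)).
have geq x : x != t.2 -> gval P' x = gval P x by move=> nx; rewrite gval_other.
have liveh x : live x -> x = t.2 -> (h t.2 H' != +oo)%E.
  by move=> lx xe; rewrite lt_eqF // -xe live_fin.
constructor => /=.
- exact: reachH'.
- move=> x; rewrite in_setU1 => /orP[/eqP->|xK].
    by apply: pdef_new; rewrite Ps.
  by apply: pdef_keep; apply: (i_def I xK).
- by rewrite in_setU1 (i_sIK I) orbT.
- exact: le_trans (gle _ (i_sIK I)) (i_sI I).
- by move=> x /sub1; apply: (i_goal I).
- by move=> x /sub1 /(i_clK I) xK; rewrite in_setU1 xK orbT.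
- move=> e /sub4 [/(i_openK I) eK| ->]; first by rewrite in_setU1 eK orbT.
  by rewrite in_setU1 eqxx.
- by move=> e /sub4 [/(i_openH I) //| ->]; exact: adm.
- move=> x xK' lx xc; have [xe|nx] := eqVneq x t.2.
  + subst x; have [/(_ xc) [nin| [tK tc tle]] _] := spec (liveh _ lx erefl).
      by exists (t.2, gval P' t.2, h t.2 H').
    have [e ein [e1 e2]] := i_op I tK lx tc.
    by exists e; [exact: sub3 | split => //; exact: le_trans e2 tle].
  + have xK : x \in cknown cf by move: xK'; rewrite in_setU1 (negbTE nx).
    have xc0 : x \notin cclosed cf by apply: contra xc; exact: sub2.
    have [e ein [e1 e2]] := i_op I xK lx xc0.
    by exists e; [exact: sub3 | rewrite geq].
- move=> x t0 xc lx t0T t0x [t0e|ext].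
  + subst t0; split; first by rewrite in_setU1 eqxx.
    rewrite -t0x (gval_self c_ge0 Ps); exact: (gval_new c Ps).
  + have xc0 := sub1 _ xc.
    have [t2K le0] := i_cl I xc0 lx t0T t0x ext.
    split; first by rewrite in_setU1 t2K orbT.
    apply: le_trans (gle _ t2K) _; apply: le_trans le0 _; rewrite lerD2r.
    have [xe|nx] := eqVneq x t.2; last by rewrite geq.
    have [_ H2] := spec (liveh _ lx xe).
    have xc' : t.2 \in cl' by rewrite -xe.
    have [nK|le] := H2 xc'.
      by rewrite -xe (i_clK I xc0) in nK.
    by rewrite xe.
Qed.

Lemma fold_inv ts cf ex s :
  Invp cf ex -> s \in cknown cf ->
  (forall t, t \in ts -> t \in T /\ t.1.1 = s) ->
  Invp (foldl (process c h) cf ts) (fun x t0 => t0 \in ts \/ ex x t0).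
Proof.
elim: ts cf ex => [|t ts IH] cf ex I sK Hts /=.
  by apply: (Invp_weak I) => x t0 _ _ [] //; rewrite in_nil.
have [tT ts1] := Hts t (mem_head _ _).
have I1 := process_inv I tT (etrans (f_equal (fun z => z \in cknown cf) ts1) sK).
have sK1 : s \in cknown (process c h cf t).
  have [cl' [op' [-> _]]] := process_spec cf t.
  by rewrite /= in_setU1 sK orbT.
have Hts' t0 : t0 \in ts -> t0 \in T /\ t0.1.1 = s.
  by move=> ht0; apply: Hts; rewrite inE ht0 orbT.
have := IH _ _ I1 sK1 Hts'.
move/Invp_weak; apply => x t0 _ _; rewrite inE => -[/orP[/eqP->|ht0]|ext].
- by right; left.
- by left.
- by right; right.
Qed.

Definition Inv cf := Invp cf (fun _ _ => True).

Lemma step_inv cf cf' : Inv cf -> iter_step c T SG h reeval cf cf' -> Inv cf'.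
Proof.
move=> I st; case: st I => {cf cf'}
  [cf e rest [ein emin ->] ec | cf e rest [ein emin ->] ec rv hlt
  | cf e rest ts [ein emin ->] ec nre nSG pts] I.
- constructor => /=; try by case: I.
  + by move=> e0 /mem_rem; exact: (i_openK I).
  + by move=> e0 /mem_rem; exact: (i_openH I).
  + move=> x xK lx xc; have [e' e'in [e1 e2]] := i_op I xK lx xc.
    exists e' => //; apply: rem_mem => //; apply/eqP => E.
    by move: xc; rewrite -e1 E ec.
- set s := e.1.1 in ec hlt *.
  have sK : s \in cknown cf := i_openK I ein.
  have rch : reach_info T sI (refH cf s) (cknown cf).
    by apply: RI_refine => //; exact: i_reach I.
  have rH : reachable_info T sI (refH cf s) by exists (cknown cf).
  set nw := (s, gval (refP cf s) s, h s (refH cf s)).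
  set o' := if _ then _ else _.
  have o1 e0 : e0 \in o' -> e0 \in rem e (copen cf) \/ e0 = nw.
    rewrite /o'; case: ifP => _ //; last by left.
    by rewrite inE => /orP[/eqP->|]; [right|left].
  have o2 e0 : e0 \in rem e (copen cf) -> e0 \in o'.
    by rewrite /o'; case: ifP => _ // H; rewrite inE H orbT.
  have o3 : (h s (refH cf s) < +oo)%E -> nw \in o'.
    by rewrite /o' => ->; rewrite inE eqxx.
  constructor => /=; try by case: I.
  + by move=> e0 /o1 [/mem_rem/(i_openK I) //| ->].
  + move=> e0 /o1 [/mem_rem/(i_openH I) //| ->]; exact: adm.
  + move=> x xK lx xc; have [e' e'in [e1 e2]] := i_op I xK lx xc.
    have [E|ne] := eqVneq e' e.
      have xs : x = s by rewrite -e1 E.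
      exists nw; first by apply: o3; apply: live_fin rH; rewrite -xs.
      by rewrite /nw /= xs.
    by exists e' => //; apply: o2; apply: rem_mem.
- set s := e.1.1 in ec nre nSG pts *.
  have sK : s \in cknown cf := i_openK I ein.
  set C0 := Config (refP cf s) (refH cf s) (cknown cf) (s |: cclosed cf) (rem e (copen cf)).
  have I0 : Invp C0 (fun x _ => x <> s).
    constructor => /=; try by case: I.
    + by apply: RI_refine => //; exact: i_reach I.
    + by move=> x; rewrite in_setU1 => /orP[/eqP->//|]; exact: (i_goal I).
    + by move=> x; rewrite in_setU1 => /orP[/eqP->//|]; exact: (i_clK I).
    + by move=> e0 /mem_rem; exact: (i_openK I).
    + by move=> e0 /mem_rem; exact: (i_openH I).
    + move=> x xK lx; rewrite in_setU1 negb_or => /andP[xs xc].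
      have [e' e'in [e1 e2]] := i_op I xK lx xc.
      exists e' => //; apply: rem_mem => //; apply/eqP => E.
      by move: xs; rewrite -e1 E eqxx.
    + move=> x t xc lx tT tx xs; move: xc; rewrite in_setU1.
      have -> : (x == s) = false by apply/eqP.
      by move=> /= xc; exact: (i_cl I).
  have Hts t : t \in ts -> t \in T /\ t.1.1 = s.
    rewrite (perm_mem pts) mem_filter mem_enum => /andP[/eqP ? ?]; done.
  have := fold_inv I0 sK Hts.
  move/Invp_weak; apply => x t tT tx _.
  have [xs|xs] := eqVneq x s; last by right; apply/eqP.
  left; rewrite (perm_mem pts) mem_filter mem_enum tT andbT.
  by rewrite tx xs.
Qed.

Lemma init_inv : Inv (init_config sI h).
Proof.
have r0 : reach_info T sI (info0 σ) [set sI] by exact: RI_init.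
have r0' : reachable_info T sI (info0 σ) by exists [set sI].
rewrite /init_config /=.
constructor => /=.
- exact: r0.
- by move=> x; rewrite finset.in_set1 => /eqP->; rewrite eqxx.
- by rewrite finset.in_set1.
- by rewrite /gval eqxx.
- by move=> x; rewrite finset.in_set0.
- by move=> x; rewrite finset.in_set0.
- by case: ifP => _ // e; rewrite mem_seq1 => /eqP-> /=; rewrite finset.in_set1.
- case: ifP => _ // e; rewrite mem_seq1 => /eqP-> /=; exact: adm.
- move=> x; rewrite finset.in_set1 => /eqP-> lx _.
  have hf : (h sI (info0 σ) < +oo)%E by apply: live_fin lx r0'.
  rewrite hf.
  by eexists; [exact: mem_head | split].
- by move=> x t; rewrite finset.in_set0.
Qed.

Lemma open_case cf p s s' g0 : Inv cf -> s \in cknown cf -> s \notin cclosed cf ->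
  is_path T s p s' -> s' \in SG -> gval (cfgP cf) s <= g0 ->
  exists2 e, e \in copen cf & (entry_val e <= (g0 + path_cost c p)%:E)%E.
Proof.
move=> I sK sc Hp Hs sg.
have lx : live s by exists p, s'.
have [e ein [e1 e2]] := i_op I sK lx sc.
exists e => //; rewrite /entry_val EFinD.
apply: leeD; first by rewrite lee_fin; exact: le_trans e2 sg.
by apply: le_trans (i_openH I ein) _; rewrite e1; exact: hstar_le Hp Hs.
Qed.

Lemma walk cf : Inv cf -> forall p s s' g0, is_path T s p s' -> s' \in SG ->
  s \in cknown cf -> gval (cfgP cf) s <= g0 ->
  exists2 e, e \in copen cf & (entry_val e <= (g0 + path_cost c p)%:E)%E.
Proof.
move=> I; elim=> [|t p IH] s s' g0 Hp Hs sK sg.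
  case: (boolP (s \in cclosed cf)) => sc; last exact: open_case Hp Hs sg.
  by move: Hp Hs => /= <-; rewrite (negbTE (i_goal I sc)).
case: (boolP (s \in cclosed cf)) => sc; last exact: open_case Hp Hs sg.
have lx : live s by exists (t :: p), s'.
case: Hp => tT [ts Hp].
have [t2K le] := i_cl I sc lx tT ts Logic.I.
have le2 : gval (cfgP cf) t.2 <= g0 + c t.1.2.
  by apply: le_trans le _; rewrite lerD2r.
have [e ein le'] := IH _ _ (g0 + c t.1.2) Hp Hs t2K le2.
exists e => //; move: le'; rewrite /path_cost big_cons addrA.
done.
Qed.

Lemma exists_min (l : seq (S * R * \bar R)) : l != [::] ->
  exists2 e, e \in l & forall e', e' \in l -> (entry_val e <= entry_val e')%E.
Proof.
elim: l => // a l IH _.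
have [->|ne] := eqVneq l [::].
  exists a; first by rewrite inE eqxx.
  by move=> e'; rewrite inE => /eqP->.
have [b bin bmin] := IH ne.
case: (leP (entry_val a) (entry_val b)) => ab.
- exists a; first exact: mem_head.
  move=> e'; rewrite inE => /orP[/eqP->//|/bmin]; exact: le_trans ab.
- exists b; first by rewrite inE bin orbT.
  move=> e'; rewrite inE => /orP[/eqP->|/bmin //]; exact: ltW.
Qed.

Lemma main cf : loop_head c T sI SG h reeval cf -> solvable T sI SG ->
  exists2 e, e \in copen cf & (entry_val e <= hstar c T SG sI)%E.
Proof.
move=> lh [p0 [s0 [Hs0 Hp0]]].
have I : Inv cf.
  elim: lh => [|cf1 cf2 _ I1 st]; [exact: init_inv | exact: step_inv I1 st].
have sol p s' : is_path T sI p s' -> s' \in SG ->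
    exists2 e, e \in copen cf & (entry_val e <= (path_cost c p)%:E)%E.
  move=> Hp Hs; have [e ein le] := walk I Hp Hs (i_sIK I) (i_sI I).
  by exists e; rewrite // -[path_cost _ _]add0r.
have ne : copen cf != [::].
  have [e ein _] := sol _ _ Hp0 Hs0.
  by apply/eqP => E; rewrite E in ein.
have [e ein emin] := exists_min ne.
exists e => //; apply: le_ereal_inf_tmp => _ [p [s' Hs Hp] <-].
have [e' e'in le] := sol p s' Hp Hs.
exact: le_trans (emin _ e'in) le.
Qed.
End Main.

Theorem lemma3 (R : realType) (S L : finType) (c : L -> R)
    (T : {set trans S L}) (sI : S) (SG : {set S})
    (σ : info_source S L) (h : S -> info σ -> \bar R) (reeval : bool) :
  (forall l, 0 <= c l) ->
  dyn_heuristic h ->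
  dyn_admissible c T sI SG h ->
  solvable T sI SG ->
  forall cf : config R σ, loop_head c T sI SG h reeval cf ->
  exists2 e, e \in copen cf & (entry_val e <= hstar c T SG sI)%E.
Proof.
move=> c0 _ adm sol cf lh; exact: (main c0 adm lh sol).
Qed.
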